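(* Let $G\curvearrowright X$ and $H\curvearrowright Y$ be group actions with $\mathrm{Con}(G\curvearrowright X)=\mathrm{Con}(H\curvearrowright Y)$. Then: (1) $X$ is finite (resp. infinite) if and only if $Y$ is finite (resp. infinite); (2) for every $n$, $|X|=n$ if and only if $|Y|=n$; (3) for every $n$, $|X|\ge n$ if and only if $|Y|\ge n$.
   Context: For an action $G\curvearrowright X$, an ordered tuple $\mathfrak{g}=(g_1,\dots,g_n)$ of elements of $G$ and a finite partition $\mathcal{E}=\{E_1,\dots,E_m\}$ of $X$ (a configuration pair), a configuration is a tuple $C=(C_0,\dots,C_n)\in\{1,\dots,m\}^{n+1}$ such that some $x\in E_{C_0}$ satisfies $g_i\cdot x\in E_{C_i}$ for $i=1,\dots,n$; the set of these is $\mathrm{Con}(\mathfrak{g},\mathcal{E};X)$. Then $\mathrm{Con}(G\curvearrowright X)=\{\mathrm{Con}(\mathfrak{g},\mathcal{E};X): (\mathfrak{g},\mathcal{E})\text{ a configuration pair}\}$. *)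

(* Defs.v *)
From Stdlib Require List.
From mathcomp Require Import all_boot.
Set Implicit Arguments. Unset Strict Implicit. Unset Printing Implicit Defensive.

Record grp_action (G X : Type) := GrpAction {
  gmul : G -> G -> G;
  gone : G;
  ginv : G -> G;
  gmulA : forall a b c, gmul a (gmul b c) = gmul (gmul a b) c;
  gmul1 : forall a, gmul gone a = a;
  gmulV : forall a, gmul (ginv a) a = gone;
  act : G -> X -> X;
  act1 : forall x, act gone x = x;
  actM : forall g h x, act (gmul g h) x = act g (act h x)
}.

(* A finite partition {E_1,...,E_m} of X is encoded by the labelling map
   p : X -> 'I_m (x lies in E_{p x + 1}); the blocks are nonempty, i.e. p is
   surjective. *)
Definition partition_map (X : Type) (m : nat) (p : X -> 'I_m) : Prop :=
  forall i : 'I_m, exists x, p x = i.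

Definition Con (G X : Type) (a : grp_action G X) (n : nat) (gs : n.-tuple G)
  (m : nat) (p : X -> 'I_m) : seq nat -> Prop :=
  fun C => exists x : X,
    C = (nat_of_ord (p x)).+1 :: [seq (nat_of_ord (p (act a g x))).+1 | g <- gs].

Definition ConAll (G X : Type) (a : grp_action G X) (S : seq nat -> Prop) : Prop :=
  exists (n : nat) (gs : n.-tuple G) (m : nat) (p : X -> 'I_m),
    partition_map p /\ (forall C, S C <-> Con a gs p C).

Definition is_finite (X : Type) : Prop := exists l : list X, forall x, List.In x l.

Definition has_card (X : Type) (n : nat) : Prop :=
  exists (f : 'I_n -> X) (g : X -> 'I_n), cancel f g /\ cancel g f.

Definition card_ge (X : Type) (n : nat) : Prop :=
  exists f : 'I_n -> X, injective f.

(* Main.v *)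
Require Import Defs.
From mathcomp Require Import all_boot.
From Stdlib Require Import ClassicalEpsilon Classical.
From Stdlib Require List.
Set Implicit Arguments. Unset Strict Implicit. Unset Printing Implicit Defensive.

Definition Surj (X : Type) (m : nat) := exists p : X -> 'I_m, partition_map p.
Definition Sm (m : nat) : seq nat -> Prop := fun C => exists i : 'I_m, C = [:: i.+1].

Lemma surj_ConAll G X (a : grp_action G X) m : Surj X m -> ConAll a (Sm m).
Proof.
case=> p hp; exists 0, [tuple], m, p; split => // C; split.
- by case=> i ->; case: (hp i) => x <-; exists x.
- by case=> x ->; exists (p x).
Qed.

Lemma ConAll_surj G X (a : grp_action G X) m : ConAll a (Sm m) -> Surj X m.
Proof.
case=> n [gs [m' [p' [hp hS]]]].
have H : forall y, p' y < m.
  move=> y; have [i [-> _]] : Sm m ((p' y).+1 :: [seq (nat_of_ord (p' (act a g y))).+1 | g <- gs]).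
    by apply/hS; exists y.
  by [].
exists (fun y => Ordinal (H y)) => i.
have [y hy] : Con a gs p' [:: i.+1] by apply/hS; exists i.
exists y; apply: val_inj => /=; by case: hy.
Qed.

Lemma surj_card_ge X n : Surj X n -> card_ge X n.
Proof.
case=> p hp.
exists (fun i => proj1_sig (constructive_indefinite_description _ (hp i))).
move=> i j; case: constructive_indefinite_description => x /= <-.
by case: constructive_indefinite_description => y /= <- ->.
Qed.

Lemma card_ge_surj X n : card_ge X n.+1 -> Surj X n.+1.
Proof.
case=> f finj.
exists (fun x => match excluded_middle_informative (exists i, f i = x) with
  | left h => proj1_sig (constructive_indefinite_description _ h)
  | right _ => ord0 end) => i.
exists (f i); case: excluded_middle_informative => [h|nh].
- by case: constructive_indefinite_description => j /= /finj.
- by exfalso; apply: nh; exists i.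
Qed.

Lemma card_ge0 X : card_ge X 0.
Proof.
have F : forall i : 'I_0, False by case.
exists (fun i => match F i with end) => i; by case: (F i).
Qed.

Lemma card_ge_iff X n : card_ge X n <-> n = 0 \/ Surj X n.
Proof.
case: n => [|n]; split.
- by left.
- by move=> _; apply: card_ge0.
- by move/card_ge_surj; right.
- by case=> // /surj_card_ge.
Qed.

Lemma ext_inj X k (f : 'I_k -> X) x : injective f -> (forall i, f i <> x) -> card_ge X k.+1.
Proof.
move=> finj hx.
exists (fun i => match unlift ord_max i with Some j => f j | None => x end).
move=> i j; case: unliftP => [i' ->|->]; case: unliftP => [j' ->|->] //.
- by move/finj ->.
- by move=> e; exfalso; apply: (hx i').
- by move=> e; exfalso; apply: (hx j'); rewrite e.
Qed.

Lemma In_map (A : eqType) B (f : A -> B) (s : seq A) a : a \in s -> List.In (f a) (map f s).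
Proof.
elim: s => //= b s IH; rewrite in_cons => /orP [/eqP ->|h]; [by left | by right; apply: IH].
Qed.

Lemma finite_iff X : is_finite X <-> exists n, ~ card_ge X n.
Proof.
split.
- case=> l hl; exists (length l).+1; case=> f finj.
  have E : forall i, exists j : 'I_(length l), List.nth j l (f ord0) = f i.
    move=> i; have [j [/ltP jl e]] := List.In_nth l (f i) (f ord0) (hl (f i)).
    by exists (Ordinal jl).
  pose h i := proj1_sig (constructive_indefinite_description _ (E i)).
  have hinj : injective h.
    move=> i j; rewrite /h; case: constructive_indefinite_description => i' /= ei.
    case: constructive_indefinite_description => j' /= ej e.
    by apply: finj; rewrite -ei -ej e.
  by have := @leq_card _ _ h hinj; rewrite !card_ord ltnn.
- case=> n hn; apply: NNPP => nf; apply: hn.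
  elim: n => [|k [f finj]]; first exact: card_ge0.
  have [x hx] : exists x, ~ List.In x (map f (enum 'I_k)).
    apply: not_all_ex_not => h; apply: nf; by exists (map f (enum 'I_k)).
  apply: (@ext_inj _ _ f x finj) => i e; apply: hx; rewrite -e; apply: In_map.
  by rewrite mem_enum.
Qed.

Lemma has_card_iff X n : has_card X n <-> card_ge X n /\ ~ card_ge X n.+1.
Proof.
split.
- case=> f [g [fg gf]]; split; first by exists f; apply: can_inj fg.
  case=> h hinj.
  have : injective (g \o h) by move=> i j /= /(can_inj gf) /hinj.
  by move/(@leq_card _ _ (g \o h)); rewrite !card_ord ltnn.
- case=> [[f finj] hn].
  have S : forall x, exists i, f i = x.
    move=> x; apply: NNPP => nx; apply: hn; apply: (@ext_inj _ _ f x finj) => i e.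
    by apply: nx; exists i.
  pose g x := proj1_sig (constructive_indefinite_description _ (S x)).
  exists f, g; split.
  + move=> i; apply: finj; rewrite /g; by case: constructive_indefinite_description.
  + move=> x; rewrite /g; by case: constructive_indefinite_description.
Qed.

Theorem mainTheorem2 (G X H Y : Type) (a : grp_action G X) (b : grp_action H Y)
  (hCon : forall S : seq nat -> Prop, ConAll a S <-> ConAll b S) :
  ((is_finite X <-> is_finite Y) /\ (~ is_finite X <-> ~ is_finite Y)) /\
  (forall n : nat, has_card X n <-> has_card Y n) /\
  (forall n : nat, card_ge X n <-> card_ge Y n).
Proof.
have CG : forall n, card_ge X n <-> card_ge Y n.
  move=> n; rewrite !card_ge_iff; split; case=> [->|h]; auto; right.
  - by apply: (ConAll_surj (a := b)); apply/hCon; apply: surj_ConAll.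
  - by apply: (ConAll_surj (a := a)); apply/hCon; apply: surj_ConAll.
have FI : is_finite X <-> is_finite Y.
  rewrite !finite_iff; split; case=> n hn; exists n; by rewrite ?CG // -CG.
split; [split=> //; split=> h1 h2; apply: h1; by apply/FI | split=> // n].
rewrite !has_card_iff; by rewrite !CG.
Qed.
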